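(* Let $N,k\ge 10$. Let $Z$ be a finite collection of $Nk$-grid unions such that the sets $D+[-10k,10k]^d$, $D\in Z$, are pairwise disjoint and all contained in a larger $Nk$-grid union $C$. Then $C\setminus\bigcup_{D\in Z}D$ can be tiled by almost $k$-boxes.
   Context: A set $B\subseteq\mathbb{Z}^d$ is an $M$-grid union if there exist $C\subseteq M\mathbb{Z}^d$ and $\gamma\in\mathbb{Z}^d$ with $B=\gamma+C+[1,M]^d$ and both $B$ and $\mathbb{Z}^d\setminus B$ connected (in the graph with edges $\{\alpha,\alpha\pm\epsilon^i\}$). A box is a product of integer intervals; an almost $k$-box is a box all of whose side lengths lie between $k$ and $2k$ and at most one of whose side lengths differs from $k$. Tiling means partitioning into translates of such boxes. *)

(* Defs.v *)
From mathcomp Require Import all_boot all_order all_algebra.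
Set Implicit Arguments. Unset Strict Implicit. Unset Printing Implicit Defensive.
Import Order.TTheory GRing.Theory Num.Theory.
Local Open Scope ring_scope.

Definition pt (d : nat) := 'I_d -> int.
Definition zset (d : nat) := pt d -> Prop.

Definition adj d (x y : pt d) : Prop :=
  exists i : 'I_d, `|x i - y i| = 1 /\ forall j : 'I_d, j != i -> x j = y j.

Inductive reach d (S : zset d) (x : pt d) : pt d -> Prop :=
| reach_refl : S x -> reach S x x
| reach_step y z : reach S x y -> S z -> adj y z -> reach S x z.

Definition connected_set d (S : zset d) : Prop :=
  forall x y, S x -> S y -> reach S x y.

Definition setCz d (S : zset d) : zset d := fun x => ~ S x.

Definition grid_union d (M : nat) (B : zset d) : Prop :=
  (exists (C : zset d) (gamma : pt d),
      (forall c, C c -> forall i, (M%:Z %| c i)%Z) /\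
      (forall x, B x <-> exists c, C c /\
                   forall i, 1 <= x i - gamma i - c i <= M%:Z))
  /\ connected_set B /\ connected_set (setCz B).

Definition box d (a : pt d) (l : 'I_d -> nat) : zset d :=
  fun x => forall i, a i <= x i < a i + (l i)%:Z.

Definition almost_box_sides d (k : nat) (l : 'I_d -> nat) : Prop :=
  (forall i, (k <= l i <= 2 * k)%N) /\
  (forall i j, l i <> k -> l j <> k -> i = j).

Definition tileable_almost_kboxes d (k : nat) (S : zset d) : Prop :=
  exists (I : Type) (a : I -> pt d) (l : I -> 'I_d -> nat),
    (forall t, almost_box_sides k (l t)) /\
    (forall t x, box (a t) (l t) x -> S x) /\
    (forall x, S x -> exists t, box (a t) (l t) x) /\
    (forall t u x, box (a t) (l t) x -> box (a u) (l u) x -> t = u).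

Definition thicken d (D : zset d) (r : nat) : zset d :=
  fun x => exists y, D y /\ forall i, `|x i - y i| <= r%:Z.

(* Main.v *)
Require Import Defs.
From mathcomp Require Import all_boot all_order all_algebra.
From mathcomp Require Import zify.
From Stdlib Require Import FunctionalExtensionality ProofIrrelevance ClassicalEpsilon.
Import Order.TTheory GRing.Theory Num.Theory.
Set Implicit Arguments. Unset Strict Implicit. Unset Printing Implicit Defensive.
Local Open Scope ring_scope.

Definition dv (L x y : int) := exists q : int, x - y = q * L.

Lemma int_mul_cases (q L : int) : 0 < L -> q = 0 \/ L <= q * L \/ q * L <= - L.
Proof.
move=> HL. case: (ltrgtP q 0) => Hq.
- right; right. have : q <= -1 by lia. nia.
- right; left. have : 1 <= q by lia. nia.
- by left.
Qed.

Lemma block_unique (L W s t y : int) : 0 < L -> W <= L -> dv L s t ->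
  s <= y < s + W -> t <= y < t + W -> s = t.
Proof.
move=> HL HW [q Hq] H1 H2.
case: (int_mul_cases q HL) => [Hq0|[Hq1|Hq1]]; first (subst q; lia); lia.
Qed.

Lemma sub_block (L s e t z w : int) : 0 < L -> dv L t s -> dv L e s ->
  s <= z < e -> t <= z < t + L -> t <= w < t + L -> s <= w < e.
Proof.
move=> HL [q Hq] [q' Hq'] H1 H2 H3.
have E : e - t = (q' - q) * L by lia.
case: (int_mul_cases q HL) => [Hq0|[Hq1|Hq1]];
case: (int_mul_cases (q' - q) HL) => [Hq0'|[Hq1'|Hq1']];
rewrite ?Hq0 ?mul0r in Hq; rewrite ?Hq0' ?mul0r in E; lia.
Qed.

Definition bs (L u y : int) : int := y - ((y - u) %% L)%Z.

Lemma bsP (L u y : int) : 0 < L -> dv L (bs L u y) u /\ bs L u y <= y < bs L u y + L.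
Proof.
move=> HL. rewrite /bs.
have H0 : L != 0 by lia.
have H1 := modz_ge0 (y - u) H0.
have H2 := ltz_pmod (y - u) HL.
split; last lia.
exists ((y - u) %/ L)%Z.
move: (divz_eq (y - u) L); generalize ((y - u) %/ L)%Z ((y - u) %% L)%Z.
move=> q m E; lia.
Qed.

Lemma modk_nat (k : nat) (v : int) : (0 < k)%N ->
  (`|(v %% k%:Z)%Z|%N < k)%N /\ dv k%:Z v (`|(v %% k%:Z)%Z|%N)%:Z.
Proof.
move=> hk.
have H0 : k%:Z != 0 by lia.
have HL : 0 < k%:Z by lia.
have H1 := modz_ge0 v H0.
have H2 := ltz_pmod v HL.
have E : (`|(v %% k%:Z)%Z|%N)%:Z = (v %% k%:Z)%Z by rewrite abszE ger0_norm.
split; first lia.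
exists (v %/ k%:Z)%Z. rewrite E.
move: (divz_eq v k%:Z); generalize (v %/ k%:Z)%Z (v %% k%:Z)%Z.
move=> q m F; lia.
Qed.

Lemma mul_neg1 (q L : int) : 0 < L -> -(2 * L) < q * L -> q * L < 0 -> q * L = - L.
Proof.
move=> H1 H2 H3. have : q < 0 by nia. have : -2 < q by nia.
move=> *. have -> : q = -1 by lia. lia.
Qed.

Lemma mul_pos1 (q L : int) : 0 < L -> q * L < 2 * L -> 0 < q * L -> q * L = L.
Proof.
move=> H1 H2 H3. have : 0 < q by nia. have : q < 2 by nia.
move=> *. have -> : q = 1 by lia. lia.
Qed.

Lemma first_change (P : nat -> Prop) (dd : nat) : ~ P 0%N -> P dd ->
  exists i, (i < dd)%N /\ ~ P i /\ P i.+1.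
Proof.
move=> H0. elim: dd => [|dd IH] Hd; first by [].
case: (classic (P dd)) => Hp.
- case: (IH Hp) => i [Hi [H1 H2]]. exists i; split => //. lia.
- exists dd. split => //.
Qed.

Section Main.
Variables (d n k M : nat).
Hypothesis hk : (0 < k)%N.
Hypothesis hM : (4 * k < M)%N.
Hypothesis hkM : dv k%:Z M%:Z 0.
Variables (D : 'I_n -> zset d) (C : zset d) (Cs : 'I_n -> zset d) (g : 'I_n -> pt d)
  (CC : zset d) (h : pt d).
Hypothesis HCs : forall j c, Cs j c -> forall m, dv M%:Z (c m) 0.
Hypothesis HD : forall j x, D j x <-> exists c, Cs j c /\ forall m, 1 <= x m - g j m - c m <= M%:Z.
Hypothesis HCC : forall c, CC c -> forall m, dv M%:Z (c m) 0.
Hypothesis HC : forall x, C x <-> exists c, CC c /\ forall m, 1 <= x m - h m - c m <= M%:Z.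
Hypothesis Hdisj : forall j j' x, j != j' ->
     thicken (D j) (10 * k) x -> thicken (D j') (10 * k) x -> False.
Hypothesis Hsub : forall j x, thicken (D j) (10 * k) x -> C x.

Definition aa j m : nat := (k + `|((g j m - h m) %% k%:Z)%Z|%N)%N.
Definition bb j m : nat := (k + `|((h m - g j m) %% k%:Z)%Z|%N)%N.

Lemma aaP j m : (k <= aa j m < 2 * k)%N /\ dv k%:Z (g j m - h m) (aa j m)%:Z.
Proof.
have [H1 [q Hq]] := modk_nat (g j m - h m) hk.
rewrite /aa. split; first lia. exists (q - 1). lia.
Qed.

Lemma bbP j m : (k <= bb j m < 2 * k)%N /\ dv k%:Z (h m - g j m) (bb j m)%:Z.
Proof.
have [H1 [q Hq]] := modk_nat (h m - g j m) hk.
rewrite /bb. split; first lia. exists (q - 1). lia.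
Qed.

Lemma dv_kM x : dv M%:Z x 0 -> dv k%:Z x 0.
Proof.
case=> q Hq. case: hkM => r Hr. exists (q * r).
have E1 : x = q * M%:Z by move: Hq; rewrite subr0.
have E2 : M%:Z = r * k%:Z by move: Hr; rewrite subr0.
by rewrite subr0 E1 E2 mulrA.
Qed.

Definition inI (t : bool) (a b : nat) (v : int) : Prop :=
  if t then 1 - a%:Z <= v <= M%:Z + b%:Z else 1 <= v <= M%:Z.

Definition Ext j (i : nat) (x : pt d) : Prop :=
  exists c, Cs j c /\ forall m : 'I_d, inI (m < i)%N (aa j m) (bb j m) (x m - g j m - c m).

Lemma Ext_mono j i i' x : Ext j i x -> (i <= i')%N -> Ext j i' x.
Proof.
case=> c [Hc H] Hi. exists c; split => // m.
move: (H m). rewrite /inI.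
have [A B] := aaP j m. have [A' B'] := bbP j m.
case: ltnP => Hm1; case: ltnP => Hm2; lia.
Qed.

Lemma D_Ext0 j x : D j x <-> Ext j 0 x.
Proof.
rewrite HD. split; case=> c [Hc H]; exists c; split => // m; move: (H m);
by rewrite /inI ltn0.
Qed.

Lemma Ext_thicken j i x : Ext j i x -> thicken (D j) (10 * k) x.
Proof.
case=> c [Hc H].
exists (fun m => if x m - g j m - c m < 1 then g j m + c m + 1
         else if M%:Z < x m - g j m - c m then g j m + c m + M%:Z else x m).
split.
- apply/HD. exists c; split => // m.
  case: ltrP => H1; first lia. case: ltrP => H2; lia.
- move=> m. move: (H m). rewrite /inI.
  have [A B] := aaP j m. have [A' B'] := bbP j m.
  case: ltnP => _ Hm; (case: ltrP => H1; [|case: ltrP => H2]); rewrite ler_norml; lia.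
Qed.

Definition Lay j (i : 'I_d) x := Ext j i.+1 x /\ ~ Ext j i x.

Definition S x := C x /\ forall j, ~ D j x.

Lemma Lay_S j i x : Lay j i x -> S x.
Proof.
case=> H1 H2. have T := Ext_thicken H1. split; first exact: Hsub T.
move=> j' Dx. case: (eqVneq j j') => [E|N].
- subst j'. apply: H2. apply: (@Ext_mono _ 0) => //. by apply/D_Ext0.
- apply: (Hdisj N T). exists x; split => // m. by rewrite subrr normr0.
Qed.

Definition R0 x := C x /\ forall j, ~ Ext j d x.

Lemma R0_S x : R0 x -> S x.
Proof.
case=> H1 H2; split => // j Dx. apply: (H2 j). apply: (@Ext_mono _ 0) => //. by apply/D_Ext0.
Qed.


Lemma dv_add (L x1 y1 x2 y2 : int) : dv L x1 y1 -> dv L x2 y2 -> dv L (x1 + x2) (y1 + y2).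
Proof. case=> q1 H1 [q2 H2]. exists (q1 + q2). lia. Qed.

Lemma block_move (s0 e0 o bt zt yt : int) : (0 < k)%N ->
  dv k%:Z bt o -> dv k%:Z s0 o -> dv k%:Z e0 o ->
  bt <= zt < bt + k%:Z -> bt <= yt < bt + k%:Z -> s0 <= zt < e0 -> s0 <= yt < e0.
Proof.
move=> hk0 [q1 H1] [q2 H2] [q3 H3] Hz Hy Hs.
have hk1 : 0 < k%:Z by lia.
apply: (@sub_block k%:Z s0 e0 bt zt yt hk1) => //.
- exists (q1 - q2). lia.
- exists (q3 - q2). lia.
Qed.

Lemma alignA j m (c : int) : dv k%:Z c 0 ->
  dv k%:Z (g j m + c + 1 - (aa j m)%:Z) (h m + 1) /\
  dv k%:Z (g j m + c + M%:Z + (bb j m)%:Z + 1) (h m + 1).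
Proof.
case=> q3 H3. have [_ [q1 H1]] := aaP j m. have [_ [q2 H2]] := bbP j m.
case: hkM => q4 H4.
split; [exists (q1 + q3) | exists (q3 + q4 - q2)]; lia.
Qed.

Lemma alignB (base c : int) : dv k%:Z c 0 ->
  dv k%:Z (base + c + 1) (base + 1) /\ dv k%:Z (base + c + M%:Z + 1) (base + 1).
Proof.
case=> q3 H3. case: hkM => q4 H4.
split; [exists q3 | exists (q3 + q4)]; lia.
Qed.

Lemma side_lemma (a b u w e : int) : 0 < a -> 0 < b -> a + b < M%:Z -> dv M%:Z e 0 ->
  ((1 - a <= u <= 0 /\ 1 - a <= w <= 0) \/
   (M%:Z + 1 <= u <= M%:Z + b /\ M%:Z + 1 <= w <= M%:Z + b)) ->
  1 <= u - e <= M%:Z -> 1 <= w - e <= M%:Z.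
Proof.
move=> Ha Hb Hab [q Hq] Hs Hu.
have HM0 : 0 < M%:Z by lia.
case: Hs => [[H1 H2]|[H1 H2]].
- have := @mul_neg1 q M%:Z HM0. lia.
- have := @mul_pos1 q M%:Z HM0. lia.
Qed.

Lemma lr_disj (G a b s s' y : int) : 0 <= a -> 0 <= b -> a + b < M%:Z ->
  dv M%:Z s (G + 1 - a) -> dv M%:Z s' (G + 1) ->
  s <= y < s + a -> s' <= y < s' + b -> False.
Proof.
move=> Ha Hb Hab [q1 H1] [q2 H2] Hy1 Hy2.
have HM0 : 0 < M%:Z by lia.
have E : s - s' + a = (q1 - q2) * M%:Z by lia.
case: (int_mul_cases (q1 - q2) HM0) => [Hq|[Hq|Hq]]; last lia; last lia.
rewrite Hq mul0r in E. lia.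
Qed.

Lemma ne_lt (m i : 'I_d) : m != i -> (m < i.+1)%N = (m < i)%N.
Proof.
move=> ne. have ne' : (m : nat) != i by [].
rewrite ltnS leq_eqVlt. by rewrite (negbTE ne').
Qed.

Definition tile := (pt d * ('I_d -> nat))%type.

Definition goodR0 (p : tile) : Prop :=
  (forall m, p.2 m = k) /\ (forall m, dv k%:Z (p.1 m) (h m + 1)) /\
  (forall z, box p.1 p.2 z -> R0 z).

Definition goodL j (i : 'I_d) (p : tile) : Prop :=
  (forall m, m != i -> p.2 m = k) /\
  (forall m : 'I_d, (m < i)%N -> dv k%:Z (p.1 m) (h m + 1)) /\
  (forall m : 'I_d, (i < m)%N -> dv k%:Z (p.1 m) (g j m + 1)) /\
  ((p.2 i = aa j i /\ dv M%:Z (p.1 i) (g j i + 1 - (aa j i)%:Z)) \/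
   (p.2 i = bb j i /\ dv M%:Z (p.1 i) (g j i + 1))) /\
  (forall z, box p.1 p.2 z -> Lay j i z).

Definition good (p : tile) : Prop := goodR0 p \/ exists j i, goodL j i p.

Lemma good_sides p : good p -> almost_box_sides k p.2.
Proof.
case=> [[H _]|[j [i [H1 [_ [_ [H4 _]]]]]]].
- split => [m|m m' A]; first by rewrite H; lia.
  by case: A; rewrite H.
- have [A _] := aaP j i. have [B _] := bbP j i.
  split.
  + move=> m. case: (eqVneq m i) => [->|ne]; last by rewrite H1 //; lia.
    case: H4 => [[-> _]|[-> _]]; lia.
  + move=> m m' Hm Hm'.
    case: (eqVneq m i) => [->|ne]; last by case: Hm; rewrite H1.
    case: (eqVneq m' i) => [->|ne]; last by case: Hm'; rewrite H1.
    done.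
Qed.

Lemma good_S p z : good p -> box p.1 p.2 z -> S z.
Proof.
case=> [[_ [_ H]]|[j [i [_ [_ [_ [_ H]]]]]]] Hz.
- exact: R0_S (H z Hz).
- exact: Lay_S (H z Hz).
Qed.

Lemma dv_same (L x x' o : int) : dv L x o -> dv L x' o -> dv L x x'.
Proof. case=> q1 H1 [q2 H2]. exists (q1 - q2). lia. Qed.

Lemma cover_R0 y : R0 y -> exists p, goodR0 p /\ box p.1 p.2 y.
Proof.
move=> [HCy HE].
have hk1 : 0 < k%:Z by lia.
exists ((fun m => bs k%:Z (h m + 1) (y m)), (fun _ => k)).
have Hb := fun m => bsP (h m + 1) (y m) hk1.
split; last first.
  by move=> m /=; exact: (Hb m).2.
split; first by [].
split; first by move=> m; exact: (Hb m).1.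
move=> z /= Hz. split.
- case/HC: HCy => c [Hc Hy]. apply/HC. exists c; split => // m.
  have [A1 A2] := alignB (h m) (dv_kM (HCC Hc m)).
  have := block_move hk (Hb m).1 A1 A2 (Hb m).2 (Hz m).
  move: (Hy m). lia.
- move=> j [c [Hc Hz']]. apply: (HE j). exists c; split => // m.
  move: (Hz' m). rewrite /inI ltn_ord => Hzm.
  have [A1 A2] := alignA j m (dv_kM (HCs Hc m)).
  have := block_move hk (Hb m).1 A1 A2 (Hz m) (Hb m).2.
  lia.
Qed.

Lemma ord_lt_neq (m i : 'I_d) : (m < i)%N -> (m == i) = false.
Proof. move=> H; apply/negbTE/eqP => E; by rewrite E ltnn in H. Qed.

Lemma ord_gt_neq (m i : 'I_d) : (i < m)%N -> (m == i) = false.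
Proof. move=> H; apply/negbTE/eqP => E; by rewrite E ltnn in H. Qed.

Lemma cover_Lay j (i : 'I_d) y : Lay j i y -> exists p, goodL j i p /\ box p.1 p.2 y.
Proof.
move=> [[c [Hc Hy]] Hn].
have hk1 : 0 < k%:Z by lia.
have Hb1 := fun m => bsP (h m + 1) (y m) hk1.
have Hb2 := fun m => bsP (g j m + 1) (y m) hk1.
have [Aa Ad] := aaP j i. have [Ba Bd] := bbP j i.
have Hyi := Hy i. rewrite /inI ltnSn in Hyi.
have Hout : ~ (1 <= y i - g j i - c i <= M%:Z).
{ move=> H. apply: Hn. exists c; split => // m. case: (eqVneq m i) => [->|ne].
  - by rewrite /inI ltnn.
  - by rewrite -(ne_lt ne); exact: Hy m. }
have [qc Hqc] := HCs Hc i.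
have [si [li [Hside [Hsi Hrange]]]] : exists si (li : nat),
   ((li = aa j i /\ dv M%:Z si (g j i + 1 - (aa j i)%:Z)) \/
    (li = bb j i /\ dv M%:Z si (g j i + 1))) /\ si <= y i < si + li%:Z /\
   ((forall w, si <= w < si + li%:Z -> 1 - (aa j i)%:Z <= w - g j i - c i <= 0) \/
    (forall w, si <= w < si + li%:Z -> M%:Z + 1 <= w - g j i - c i <= M%:Z + (bb j i)%:Z)).
{ case: (lerP (y i - g j i - c i) 0) => Hv.
  - exists (g j i + c i + 1 - (aa j i)%:Z), (aa j i). split; first (left; split => //; exists qc; lia).
    split; first lia. left => w; lia.
  - exists (g j i + c i + M%:Z + 1), (bb j i). split; first (right; split => //; exists (qc + 1); lia).
    split; first lia. right => w; lia. }
exists ((fun m => if m == i then si else if (m < i)%N then bs k%:Z (h m + 1) (y m)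
                  else bs k%:Z (g j m + 1) (y m)),
        (fun m => if m == i then li else k)).
split; last first.
{ move=> m /=. case: (eqVneq m i) => [->|ne] //. case: ltnP => _.
  - exact: (Hb1 m).2.
  - exact: (Hb2 m).2. }
split; first by move=> m /= ne; rewrite (negbTE ne).
split; first by move=> m /= Hm; rewrite (ord_lt_neq Hm) Hm; exact: (Hb1 m).1.
split. { move=> m /= Hm; rewrite (ord_gt_neq Hm). have -> : (m < i)%N = false by lia.
  exact: (Hb2 m).1. }
split; first by rewrite /= eqxx.
move=> z /= Hz. split.
- exists c; split => // m. rewrite /inI. case: (eqVneq m i) => [->|ne].
  + rewrite ltnSn. have := Hz i; rewrite eqxx => Hzi.
    case: Hrange => HR; have := HR _ Hzi; lia.
  + rewrite (ne_lt ne). have Hzm := Hz m. rewrite (negbTE ne) in Hzm.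
    have Hym := Hy m. rewrite /inI (ne_lt ne) in Hym.
    case: (ltnP m i) => Hmi.
    * rewrite Hmi in Hzm Hym.
      have [A1 A2] := alignA j m (dv_kM (HCs Hc m)).
      have := block_move hk (Hb1 m).1 A1 A2 (Hb1 m).2 Hzm.
      lia.
    * have Hmi' : (m < i)%N = false by lia.
      rewrite Hmi' in Hzm Hym.
      have [A1 A2] := alignB (g j m) (dv_kM (HCs Hc m)).
      have := block_move hk (Hb2 m).1 A1 A2 (Hb2 m).2 Hzm.
      lia.
- move=> [c' [Hc' Hz']]. apply: Hn. exists c'; split => // m.
  case: (eqVneq m i) => [->|ne].
  + rewrite /inI ltnn. have := Hz' i; rewrite /inI ltnn => Hzi.
    have := Hz i; rewrite eqxx => Hzi'.
    have [qc' Hqc'] := HCs Hc' i.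
    have He : dv M%:Z (c' i - c i) 0 by exists (qc' - qc); lia.
    have Hab : (aa j i)%:Z + (bb j i)%:Z < M%:Z by lia.
    have := @side_lemma (aa j i)%:Z (bb j i)%:Z (z i - g j i - c i) (y i - g j i - c i)
       (c' i - c i) ltac:(lia) ltac:(lia) Hab He.
    case: Hrange => HR.
    * have := HR _ Hzi'. have := HR _ Hsi. move=> H1 H2 H3.
      have := H3 (or_introl (conj H2 H1)). lia.
    * have := HR _ Hzi'. have := HR _ Hsi. move=> H1 H2 H3.
      have := H3 (or_intror (conj H2 H1)). lia.
  + have Hzm := Hz m. rewrite (negbTE ne) in Hzm.
    have Hzm' := Hz' m. rewrite /inI in Hzm'. rewrite /inI.
    case: (ltnP m i) => Hmi.
    * rewrite Hmi in Hzm Hzm' *.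
      have [A1 A2] := alignA j m (dv_kM (HCs Hc' m)).
      have := block_move hk (Hb1 m).1 A1 A2 Hzm (Hb1 m).2.
      lia.
    * have Hmi' : (m < i)%N = false by lia.
      rewrite Hmi' in Hzm Hzm' *.
      have [A1 A2] := alignB (g j m) (dv_kM (HCs Hc' m)).
      have := block_move hk (Hb2 m).1 A1 A2 Hzm (Hb2 m).2.
      lia.
Qed.

Lemma good_cover y : S y -> exists p, good p /\ box p.1 p.2 y.
Proof.
move=> [HCy HDy].
case: (classic (exists j, Ext j d y)) => [[j Hj]|HN].
- have H0 : ~ Ext j 0 y by move/D_Ext0; exact: HDy.
  have [i [Hi [H1 H2]]] := @first_change (fun i => Ext j i y) d H0 Hj.
  have [p [Hp Hb]] := @cover_Lay j (Ordinal Hi) y (conj H2 H1).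
  exists p; split => //. right; exists j, (Ordinal Hi); exact: Hp.
- have [p [Hp Hb]] : exists p, goodR0 p /\ box p.1 p.2 y.
    apply: cover_R0. split => // j Hj. apply: HN. by exists j.
  exists p; split => //. by left.
Qed.

Lemma Lay_Ed j i x : Lay j i x -> Ext j d x.
Proof. case=> H _. apply: (Ext_mono H). exact: ltn_ord. Qed.

Lemma good_disj p q y : good p -> good q -> box p.1 p.2 y -> box q.1 q.2 y -> p = q.
Proof.
have hk1 : 0 < k%:Z by lia.
have HM1 : 0 < M%:Z by lia.
case: p => s l; case: q => s' l' /=.
move=> Hp Hq Hy Hy'.
suff H : forall m, s m = s' m /\ l m = l' m.
  f_equal; apply: functional_extensionality => m; by case: (H m).
move=> m.
rewrite /good /goodR0 /goodL /= in Hp Hq.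
case: Hp => [[Hl [Hs Hin]]|[j [i [Hl [Hs1 [Hs2 [Hside Hin]]]]]]];
case: Hq => [[Hl' [Hs' Hin']]|[j' [i' [Hl' [Hs1' [Hs2' [Hside' Hin']]]]]]].
- rewrite Hl Hl'. split => //.
  apply: (@block_unique k%:Z k%:Z _ _ (y m) hk1) => //.
  + exact: dv_same (Hs m) (Hs' m).
  + by move: (Hy m); rewrite Hl.
  + by move: (Hy' m); rewrite Hl'.
- case: (Hin y Hy) => _ H. case: (H j'). exact: Lay_Ed (Hin' y Hy').
- case: (Hin' y Hy') => _ H. case: (H j). exact: Lay_Ed (Hin y Hy).
- have L1 := Hin y Hy. have L2 := Hin' y Hy'.
  case: (eqVneq j j') => [E|ne]; last first.
    case: (Hdisj ne (Ext_thicken L1.1) (Ext_thicken L2.1)).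
  subst j'.
  have Ei : i = i'.
  { case: (ltngtP i i') => Hii; last by apply: val_inj.
    - case: L2.2. apply: (Ext_mono L1.1). exact: Hii.
    - case: L1.2. apply: (Ext_mono L2.1). exact: Hii. }
  subst i'.
  have [Aa _] := aaP j i. have [Ba _] := bbP j i.
  case: (eqVneq m i) => [->|ne].
  + have Hyi := Hy i. have Hyi' := Hy' i.
    case: Hside => [[Hli Hsi]|[Hli Hsi]]; case: Hside' => [[Hli' Hsi']|[Hli' Hsi']];
      rewrite ?Hli ?Hli' in Hyi Hyi' *.
    * split => //. apply: (@block_unique M%:Z (aa j i)%:Z _ _ (y i) HM1) => //.
      by lia. exact: dv_same Hsi Hsi'.
    * case: (@lr_disj (g j i) (aa j i)%:Z (bb j i)%:Z (s i) (s' i) (y i)) => //; lia.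
    * case: (@lr_disj (g j i) (aa j i)%:Z (bb j i)%:Z (s' i) (s i) (y i)) => //; lia.
    * split => //. apply: (@block_unique M%:Z (bb j i)%:Z _ _ (y i) HM1) => //.
      by lia. exact: dv_same Hsi Hsi'.
  + rewrite (Hl m ne) (Hl' m ne). split => //.
    have Hym := Hy m. have Hym' := Hy' m. rewrite (Hl m ne) in Hym. rewrite (Hl' m ne) in Hym'.
    apply: (@block_unique k%:Z k%:Z _ _ (y m) hk1) => //.
    case: (ltnP m i) => Hmi.
    * exact: dv_same (Hs1 m Hmi) (Hs1' m Hmi).
    * have Hmi' : (i < m)%N.
        have : (m : nat) != i by [].
        lia.
      exact: dv_same (Hs2 m Hmi') (Hs2' m Hmi').
Qed.

Lemma main_tiling : tileable_almost_kboxes k S.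
Proof.
exists {p : tile | good p}, (fun t => (proj1_sig t).1), (fun t => (proj1_sig t).2).
split; first by move=> [p Hp]; exact: good_sides.
split; first by move=> [p Hp] x /= Hx; exact: good_S Hp Hx.
split.
- move=> x Hx. have [p [Hp Hb]] := good_cover Hx. by exists (exist _ p Hp).
- move=> [p Hp] [q Hq] x /= H1 H2.
  have E := good_disj Hp Hq H1 H2. subst q. f_equal. apply: proof_irrelevance.
Qed.
End Main.

Lemma dvdz_dv (M : nat) (x : int) : ((M%:Z) %| x)%Z -> dv M%:Z x 0.
Proof. move/dvdzP => [q ->]. exists q. by rewrite subr0. Qed.

Unset Implicit Arguments.

Theorem proposition6p3 (d N k n : nat) (D : 'I_n -> zset d) (C : zset d) :
  (10 <= N)%N -> (10 <= k)%N ->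
  (forall j, grid_union (N * k) (D j)) ->
  grid_union (N * k) C ->
  (forall j j' x, j != j' ->
     thicken (D j) (10 * k) x -> thicken (D j') (10 * k) x -> False) ->
  (forall j x, thicken (D j) (10 * k) x -> C x) ->
  tileable_almost_kboxes k (fun x => C x /\ forall j, ~ D j x).
Proof.
move=> hN hk HDj HCg Hdisj Hsub.
have H' : forall j, exists p : zset d * pt d,
   (forall c, p.1 c -> forall m, dv (N * k)%N%:Z (c m) 0) /\
   (forall x, D j x <-> exists c, p.1 c /\ forall m, 1 <= x m - p.2 m - c m <= (N * k)%N%:Z).
{ move=> j. case: (HDj j) => [[Cs [g [H1 H2]]] _]. exists (Cs, g); split => //=.
  move=> c Hc m. exact: dvdz_dv (H1 c Hc m). }
pose f := fun j => proj1_sig (constructive_indefinite_description _ (H' j)).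
have Hf : forall j, _ := fun j => proj2_sig (constructive_indefinite_description _ (H' j)).
case: HCg => [[CC [h [HCC HC]]] _].
have hk0 : (0 < k)%N by lia.
have hM : (4 * k < N * k)%N by nia.
have hkM : dv k%:Z (N * k)%N%:Z 0 by exists N%:Z; rewrite subr0 PoszM.
have := @main_tiling d n k (N * k) hk0 hM hkM D C (fun j => (f j).1) (fun j => (f j).2) CC h
  (fun j => (Hf j).1) (fun j => (Hf j).2) (fun c Hc m => dvdz_dv (HCC c Hc m)) HC Hdisj Hsub.
by [].
Qed.
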